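(* Let $N\ge 2$, $m\ge N$, $\theta>0$, and let $\rho_\kappa=\Upsilon(\kappa,\gamma_r,m)$, $\kappa=1,\dots,m$, be request probabilities (nonnegative, summing to $1$) given by a popularity distribution $\Upsilon$ with skew exponent $\gamma_r$. With the caching/request model, operating modes, mode probabilities $\mathcal{P}_\Delta$, transmission probability $\mathcal{P}_{\textup{TX}}$ and interference model described in the context, the success probability of an arbitrary node satisfies \[ \textup{P}_{\rm s}(N,\gamma_r,\theta)=\frac{1}{N}\mathcal{P}_{\textup{hit}}+\sum_{n_t=1}^{N}\left(\mathcal{P}_{\textup{HDRX}}\,\mathcal{L}_{\mathcal{I},\textup{HDRX}}(\theta;n_t)+\mathcal{P}_{\textup{FDTR}}\,\mathcal{L}_{\mathcal{I},\textup{FDTR}}(\theta;n_t)\right)\binom{N}{n_t}\mathcal{P}_{\textup{TX}}^{\,n_t}\left(1-\mathcal{P}_{\textup{TX}}\right)^{N-n_t}, \] where $\mathcal{P}_{\textup{hit}}=\sum_{\kappa=1}^N\rho_\kappa$.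
   Context: Caching/request model: users $u_1,\dots,u_N$; $u_\kappa$ caches only content $c_\kappa$ of a library $c_1,\dots,c_m$; each user $u_\mu$ independently requests one content $R_\mu$ with $\Pr(R_\mu=c_\ell)=\rho_\ell$; $K$ is uniform on $\{1,\dots,N\}$ independent of requests. Let $S_\kappa$ be the event that some $u_\mu$, $\mu\ne\kappa$, requests $c_\kappa$. Modes of $u_\kappa$: SR: $R_\kappa=c_\kappa$ and not $S_\kappa$; SR-HDTX: $R_\kappa=c_\kappa$ and $S_\kappa$; FDTR: $R_\kappa=c_\mu$ for some $\mu\ne\kappa$, $\mu\le N$, and $S_\kappa$; HDRX: $R_\kappa=c_\mu$ for some $\mu\ne\kappa$, $\mu\le N$, and not $S_\kappa$; HDTX: $R_\kappa\notin\{c_1,\dots,c_N\}$ and $S_\kappa$. $\mathcal{P}_\Delta$ is the probability that $u_K$ is in mode $\Delta$, and $\mathcal{P}_{\textup{TX}}=\mathcal{P}_{\textup{SR-HDTX}}+\mathcal{P}_{\textup{HDTX}}+\mathcal{P}_{\textup{FDTR}}$. Interference model: fix $\mathcal{R}>0$, $\alpha>2$, $\beta\in[0,1]$. For an integer $n_t\ge1$ and $\delta\in\{\textup{HDRX},\textup{FDTR}\}$, let $\mathbf{x}_0,\mathbf{y}_0,\mathbf{y}_1,\dots,\mathbf{y}_{n_t-1},\mathbf{x}_1,\dots,\mathbf{x}_{n_t-1}$ be independent uniform points in the disk of radius $\mathcal{R}$ centered at the origin, $h_0,h_1,\dots,h_{n_t-1}$ i.i.d. exponential with mean $1$ independent of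 the points, $Z_0=\|\mathbf{y}_0-\mathbf{x}_0\|$, $Z_i=\|\mathbf{y}_i-\mathbf{x}_i\|$, $W_i=\|\mathbf{y}_i-\mathbf{x}_0\|$, $\mathbbm{1}_\delta=1$ for FDTR and $0$ for HDRX, $\mathcal{I}_\delta=\sum_{i=1}^{n_t-1}(h_iZ_i^\alpha W_i^{-\alpha}+\mathbbm{1}_\delta\beta Z_0^\alpha)$, $\mathtt{SIR}_\delta=h_0/\mathcal{I}_\delta$, and $\mathcal{L}_{\mathcal{I},\delta}(s;n_t)=\mathbb{E}[e^{-s\mathcal{I}_\delta}]$. The number of concurrent transmitters $N_t$ is modeled as Binomial$(N,\mathcal{P}_{\textup{TX}})$. Success probability: $\textup{P}_{\rm s}(N,\gamma_r,\theta)$ is the probability that the arbitrary node $u_K$ either finds its desired content in its own cache (modes SR or SR-HDTX) or is a receiver in mode $\delta\in\{\textup{HDRX},\textup{FDTR}\}$ whose $\mathtt{SIR}_\delta$ (with $n_t=N_t$ transmitters, averaged over $N_t\in\{1,\dots,N\}$ with the binomial weights, the mode being independent of the $\mathtt{SIR}$) is at least $\theta$; i.e. $\textup{P}_{\rm s}=\mathcal{P}_{\textup{SR}}+\mathcal{P}_{\textup{SR-HDTX}}+\sum_{n_t=1}^N\binom{N}{n_t}\mathcal{P}_{\textup{TX}}^{n_t}(1-\mathcal{P}_{\textup{TX}})^{N-n_t}\sum_{\delta}\mathcal{P}_\delta\Pr(\mathtt{SIR}_\delta\ge\theta\mid N_t=n_t)$. *)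

(* Defs.v *)
From HB Require Import structures.
From mathcomp Require Import all_boot all_order all_algebra.
From mathcomp Require Import all_classical all_reals all_analysis.
Set Implicit Arguments. Unset Strict Implicit. Unset Printing Implicit Defensive.
Import Order.TTheory GRing.Theory Num.Theory.
Import numFieldNormedType.Exports.
Local Open Scope classical_set_scope.
Local Open Scope ring_scope.

(* Users u_1..u_N are indexed by k : 'I_N (u_{k+1}), contents c_1..c_m by
   l : 'I_m (c_{l+1}).  User u_{k+1} caches c_{k+1}.  A request profile is
   r : {ffun 'I_N -> 'I_m}, r mu being the (index of the) content requested
   by user mu. *)

Section Modes.
Variables (N m : nat).
Implicit Types (k : 'I_N) (r : {ffun 'I_N -> 'I_m}).

Definition S_ev k r : bool := [exists mu : 'I_N, (mu != k) && (val (r mu) == val k)].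

Definition mode_SR k r : bool := (val (r k) == val k) && ~~ S_ev k r.
Definition mode_SR_HDTX k r : bool := (val (r k) == val k) && S_ev k r.
Definition req_other k r : bool :=
  [exists mu : 'I_N, (mu != k) && (val (r k) == val mu)].
Definition mode_FDTR k r : bool := req_other k r && S_ev k r.
Definition mode_HDRX k r : bool := req_other k r && ~~ S_ev k r.
Definition mode_HDTX k r : bool := (N <= val (r k))%N && S_ev k r.
End Modes.

Section ModeProb.
Variables (R : realType) (N m : nat) (rho : 'I_m -> R).

(* Pr(u_K is in the mode described by pred), with K uniform on 'I_N and
   the requests R_mu i.i.d. with Pr(R_mu = c_l) = rho l. *)
Definition mode_prob (pred : 'I_N -> {ffun 'I_N -> 'I_m} -> bool) : R :=
  \sum_(k : 'I_N) \sum_(r : {ffun 'I_N -> 'I_m})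
     (N%:R)^-1 * (\prod_(mu : 'I_N) rho (r mu)) * (pred k r)%:R.

Definition P_SR := mode_prob (@mode_SR N m).
Definition P_SR_HDTX := mode_prob (@mode_SR_HDTX N m).
Definition P_FDTR := mode_prob (@mode_FDTR N m).
Definition P_HDRX := mode_prob (@mode_HDRX N m).
Definition P_HDTX := mode_prob (@mode_HDTX N m).
Definition P_TX := P_SR_HDTX + P_HDTX + P_FDTR.

Definition P_hit : R := \sum_(l < m | (val l < N)%N) rho l.

Definition binom_w (nt : nat) : R :=
  'C(N, nt)%:R * P_TX ^+ nt * (1 - P_TX) ^+ (N - nt).
End ModeProb.

Section Geometry.
Variable R : realType.

Definition dist2 (p q : R * R) : R :=
  Num.sqrt ((p.1 - q.1) ^+ 2 + (p.2 - q.2) ^+ 2).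

Definition disk (Rd : R) : set (R * R) :=
  [set p | p.1 ^+ 2 + p.2 ^+ 2 <= Rd ^+ 2].

Definition leb2 := ((@lebesgue_measure R) \x (@lebesgue_measure R))%E.
End Geometry.

Section Interference.
Variables (R : realType) (d : measure_display) (T : measurableType d)
  (P : probability T R).

Definition uniform_disk (Rd : R) (X : T -> R * R) : Prop :=
  forall A : set (R * R), measurable A ->
    P (X @^-1` A) = (@leb2 R (A `&` disk Rd) * ((pi * Rd ^+ 2)^-1)%:E)%E.

Definition exp_mean1 (H : T -> R) : Prop :=
  forall C : set R, measurable C ->
    P (H @^-1` C) =
      (\int[@lebesgue_measure R]_(t in C `&` `[0%R, +oo[%classic) (expR (- t))%:E)%E.

(* mutual independence of the family {x_i, y_i, h_i : i in nat}:
   product rule for every finite initial segment and every choice of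
   measurable sets (choosing whole spaces gives every finite subfamily). *)
Definition indep_family (x y : nat -> T -> R * R) (h : nat -> T -> R) : Prop :=
  forall (n : nat) (A B : nat -> set (R * R)) (C : nat -> set R),
    (forall i, measurable (A i) /\ measurable (B i) /\ measurable (C i)) ->
    P (\bigcap_(i in `I_n) (x i @^-1` A i `&` y i @^-1` B i `&` h i @^-1` C i)) =
    (\prod_(i < n) (P (x i @^-1` A i) * P (y i @^-1` B i) * P (h i @^-1` C i)))%E.

Variables (x y : nat -> T -> R * R) (h : nat -> T -> R).

Definition Zd (i : nat) (w : T) : R := dist2 (y i w) (x i w).
Definition Wd (i : nat) (w : T) : R := dist2 (y i w) (x 0%N w).

(* I_delta with nt transmitters; fd = true for FDTR, false for HDRX *)
Definition interf (alpha beta : R) (fd : bool) (nt : nat) (w : T) : R :=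
  \sum_(1 <= i < nt)
     (h i w * Zd i w `^ alpha * Wd i w `^ (- alpha)
      + (fd%:R) * beta * Zd 0 w `^ alpha).

(* SIR_delta = h_0 / I_delta, with the convention h_0/0 = +oo *)
Definition SIR (alpha beta : R) (fd : bool) (nt : nat) (w : T) : \bar R :=
  let I := interf alpha beta fd nt w in
  if I == 0 then +oo%E else (h 0%N w / I)%:E.

Definition laplace_I (alpha beta : R) (fd : bool) (s : R) (nt : nat) : \bar R :=
  (\int[P]_w (expR (- (s * interf alpha beta fd nt w)))%:E)%E.

(* Pr(SIR_delta >= theta | N_t = nt) *)
Definition cover_prob (alpha beta : R) (fd : bool) (theta : R) (nt : nat) : \bar R :=
  P [set w | (theta%:E <= SIR alpha beta fd nt w)%E].
End Interference.

Definition success_prob (R : realType) (d : measure_display) (T : measurableType d)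
  (P : probability T R) (x y : nat -> T -> R * R) (h : nat -> T -> R)
  (alpha beta : R) (N m : nat) (rho : 'I_m -> R) (theta : R) : \bar R :=
  ((P_SR N rho + P_SR_HDTX N rho)%:E +
   \sum_(1 <= nt < N.+1)
     ((binom_w N rho nt)%:E *
      ((P_HDRX N rho)%:E * cover_prob P x y h alpha beta false theta nt +
       (P_FDTR N rho)%:E * cover_prob P x y h alpha beta true theta nt)))%E.

(* Main.v *)
Require Import Defs.
From HB Require Import structures.
From mathcomp Require Import all_boot all_order all_algebra.
From mathcomp Require Import all_classical all_reals all_analysis.
From mathcomp Require Import ring lra.
From mathcomp Require Import measurable_realfun exponential_distribution.
Import Order.TTheory GRing.Theory Num.Theory.
Import numFieldNormedType.Exports.
Local Open Scope classical_set_scope.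
Local Open Scope ring_scope.

Lemma hit_lemma (R : realType) (N m : nat) (rho : 'I_m -> R) :
  \sum_l rho l = 1 ->
  P_SR N rho + P_SR_HDTX N rho = N%:R^-1 * P_hit N rho.
Proof.
move=> rho1.
rewrite /P_SR /P_SR_HDTX /mode_prob -big_split /=.
have step k : \sum_(r : {ffun 'I_N -> 'I_m})
   (N%:R^-1 * (\prod_(mu : 'I_N) rho (r mu)) * (mode_SR k r)%:R) +
   \sum_(r : {ffun 'I_N -> 'I_m})
   (N%:R^-1 * (\prod_(mu : 'I_N) rho (r mu)) * (mode_SR_HDTX k r)%:R)
   = N%:R^-1 * \sum_(l < m | val l == val k) rho l.
  rewrite -big_split /=.
  pose F := fun (mu : 'I_N) (l : 'I_m) =>
    rho l * (if mu == k then (val l == val k)%:R else 1).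
  transitivity (N%:R^-1 * \sum_(r : {ffun 'I_N -> 'I_m}) \prod_(mu : 'I_N) F mu (r mu)).
    rewrite mulr_sumr; apply: eq_bigr => r _.
    rewrite -mulrDr -mulrA; congr (_ * _).
    rewrite /F big_split /=; congr (_ * _).
    rewrite (bigD1 k) //= eqxx big1 ?mulr1; last first.
      by move=> mu muk; rewrite ifF //; apply/negbTE.
    rewrite /mode_SR /mode_SR_HDTX.
    by case: eqP => _; case: (S_ev k r); rewrite /= ?addr0 ?add0r.
  transitivity (N%:R^-1 * \prod_(mu : 'I_N) \sum_(l : 'I_m) F mu l).
    by rewrite bigA_distr_bigA.
  rewrite [X in _ * X](bigD1 k) //= [X in _ * (_ * X)]big1 ?mulr1; last first.
    move=> mu muk; rewrite -[RHS]rho1; apply: eq_bigr => l _.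
    by rewrite /F ifF ?mulr1 //; apply/negbTE.
  congr (_ * _); rewrite /F eqxx [RHS]big_mkcond /=.
  by apply: eq_bigr => l _; case: eqP; rewrite ?mulr1 ?mulr0.
under eq_bigr do rewrite step.
rewrite -mulr_sumr /P_hit; congr (_ * _).
rewrite (exchange_big_dep xpredT) //=.
rewrite [RHS]big_mkcond /=; apply: eq_bigr => l _.
case: ifPn => lN.
  rewrite (bigD1 (Ordinal lN)) //= big_pred0 ?addr0 // => i.
  apply/negbTE/negP => /andP[/eqP li ne]; move/negP: ne; apply.
  by apply/eqP/val_inj => /=; rewrite li.
rewrite big_pred0 // => i; apply/negbTE/negP => /eqP li.
by move: lN; rewrite li ltn_ord.
Qed.

Lemma measurable_dist2 (R : realType) d0 (T0 : measurableType d0) (f g : T0 -> R * R) :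
  measurable_fun setT f -> measurable_fun setT g ->
  measurable_fun setT (fun w => dist2 (f w) (g w)).
Proof.
move=> mf mg; rewrite /dist2.
apply: (measurableT_comp (measurable_realfun.continuous_measurable_fun (@sqrt_continuous R))).
apply: measurable_funD; apply: measurable_funX; apply: measurable_funB.
- exact: measurableT_comp measurable_fst mf.
- exact: measurableT_comp measurable_fst mg.
- exact: measurableT_comp measurable_snd mf.
- exact: measurableT_comp measurable_snd mg.
Qed.

Lemma measurable_interf (R : realType) d0 (T0 : measurableType d0)
  (x y : nat -> T0 -> R * R) (h : nat -> T0 -> R) alpha beta fd nt :
  (forall i, (i < nt)%N -> measurable_fun setT (x i)) ->
  (forall i, (i < nt)%N -> measurable_fun setT (y i)) ->
  (forall i, (0 < i < nt)%N -> measurable_fun setT (h i)) ->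
  measurable_fun setT (interf x y h alpha beta fd nt).
Proof.
move=> mx my mh.
pose t i : T0 -> R := if (0 < i < nt)%N then (fun w =>
  h i w * Zd x y i w `^ alpha * Wd x y i w `^ (- alpha)
      + (fd%:R) * beta * Zd x y 0 w `^ alpha) else (fun=> 0).
have -> : interf x y h alpha beta fd nt = fun w => \sum_(1 <= i < nt) t i w.
  apply/funext => w; rewrite /interf; apply: eq_big_nat => i ilt.
  by rewrite /t ilt.
apply: measurable_sum => i; rewrite /t; case: ifPn => [/andP[i0 int]|_]; last first.
  exact: measurable_cst.
have n0 : (0 < nt)%N by apply: leq_trans int.
apply: measurable_funD; first apply: measurable_funM; first apply: measurable_funM.
- by apply: mh; rewrite i0 int.
- apply: (measurableT_comp (measurable_powR _)).
  by apply: measurable_dist2; [exact: my|exact: mx].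
- apply: (measurableT_comp (measurable_powR _)).
  by apply: measurable_dist2; [exact: my|exact: mx].
- apply: measurable_funM; first exact: measurable_cst.
  apply: (measurableT_comp (measurable_powR _)).
  by apply: measurable_dist2; [exact: my|exact: mx].
Qed.

Lemma exp_tail (R : realType) (c : R) : 0 < c ->
  (\int[@lebesgue_measure R]_(t in `[c, +oo[) (expR (- t))%:E = (expR (- c))%:E)%E.
Proof.
move=> c0.
transitivity (\int[@lebesgue_measure R]_(t in `[c, +oo[) (exponential_pdf 1 t)%:E)%E.
  apply: eq_integral => t; rewrite inE /= in_itv /= andbT => ct.
  rewrite exponential_pdfE ?mul1r ?mulN1r //; exact: le_trans (ltW c0) ct.
have cE : continuous (fun z : R => expR (- 1 * z)).
  move=> z; apply: continuous_comp; last exact: continuous_expR.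
  by apply: continuousM => //; apply: (@continuousN _ R^o); exact: cst_continuous.
rewrite (@ge0_continuous_FTC2y _ (exponential_pdf 1) (fun x => - expR (- 1 * x)) c 0).
- by rewrite mulN1r EFinN sub0e oppeK.
- by move=> t _; exact: exponential_pdf_ge0.
- apply: (@continuous_subspaceW R^o _ _ [set` `[0, +oo[%R]); last first.
    exact: within_continuous_exponential_pdf.
  move=> t /=; rewrite !in_itv/= !andbT => ct; exact: le_trans (ltW c0) ct.
- rewrite -oppr0; apply: cvgN.
  rewrite (_ : (fun x => expR (- 1 * x)) = (fun x => expR (- x))); last first.
    by apply: boolp.funext => z; rewrite mulN1r.
  exact: cvgr_expR.
- by move=> z _; exact: ex_derive.
- by apply: cvgN; apply/cvg_at_right_filter; exact: cE.
- move=> z; rewrite in_itv/= andbT => cz; apply: derive1_exponential_pdf.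
  by rewrite in_itv /= andbT; exact: lt_trans c0 cz.
Qed.

Section Cover.
Context (R : realType) (d : measure_display) (T : measurableType d)
  (P : probability T R) (x y : nat -> T -> R * R) (h : nat -> T -> R).
Hypotheses (mx : forall i, measurable_fun setT (x i))
  (my : forall i, measurable_fun setT (y i))
  (mh : forall i, measurable_fun setT (h i))
  (hexp : forall i, exp_mean1 P (h i))
  (hind : indep_family P x y h).
Variable nt : nat.
Hypothesis nt0 : (0 < nt)%N.

Definition rect (A B C : nat -> set _) : set T :=
  \bigcap_(i in `I_nt) (x i @^-1` A i `&` y i @^-1` B i `&` h i @^-1` C i).

Definition Pi : set (set T) := [set E | exists A B C,
  (forall i, measurable (A i) /\ measurable (B i) /\ measurable (C i)) /\
  C 0%N = setT /\ E = rect A B C].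

Lemma mpre_x i A : measurable A -> measurable (x i @^-1` A).
Proof. by move=> mA; rewrite -[X in measurable X]setTI; exact: mx. Qed.
Lemma mpre_y i A : measurable A -> measurable (y i @^-1` A).
Proof. by move=> mA; rewrite -[X in measurable X]setTI; exact: my. Qed.
Lemma mpre_h i A : measurable A -> measurable (h i @^-1` A).
Proof. by move=> mA; rewrite -[X in measurable X]setTI; exact: mh. Qed.

Lemma rect_meas A B C :
  (forall i, measurable (A i) /\ measurable (B i) /\ measurable (C i)) ->
  measurable (rect A B C).
Proof.
move=> mABC; apply: bigcap_measurable; first by exists 0%N.
move=> i _; have [mA [mB mC]] := mABC i.
by apply: measurableI; [apply: measurableI|]; [exact: mpre_x|exact: mpre_y|exact: mpre_h].
Qed.

Lemma Pi_meas E : Pi E -> measurable E.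
Proof. by move=> [A [B [C [mABC [_ ->]]]]]; exact: rect_meas. Qed.

Lemma Pi_setI : setI_closed Pi.
Proof.
move=> _ _ [A [B [C [mABC [C0 ->]]]]] [A' [B' [C' [mABC' [C0' ->]]]]].
exists (fun i => A i `&` A' i), (fun i => B i `&` B' i), (fun i => C i `&` C' i).
split.
  move=> i; have [? [? ?]] := mABC i; have [? [? ?]] := mABC' i.
  by split; [|split]; apply: measurableI.
split; first by rewrite C0 C0' setTI.
apply/seteqP; split => w /=.
  move=> [H1 H2] i Hi; have [[? ?] ?] := H1 i Hi; have [[? ?] ?] := H2 i Hi.
  by split; [split|]; split.
move=> H; split => i Hi; have [[[? ?] [? ?]] [? ?]] := H i Hi.
  by split; [split|].
by split; [split|].
Qed.

Lemma Pi_indep E C : measurable C -> Pi E ->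
  P (E `&` h 0 @^-1` C) = (P E * P (h 0 @^-1` C))%E.
Proof.
move=> mC [A [B [Cs [mABC [C0 ->]]]]].
pose Cs' := fun i => if i == 0%N then C else Cs i.
have mABC' : forall i, measurable (A i) /\ measurable (B i) /\ measurable (Cs' i).
  move=> i; have [? [? ?]] := mABC i; split => //; split => //.
  by rewrite /Cs'; case: eqP.
have -> : rect A B Cs `&` h 0 @^-1` C = rect A B Cs'.
  apply/seteqP; split => w /=.
    move=> [H1 H2] i Hi; have := H1 i Hi; rewrite /Cs'.
    by case: eqP => [->|//] [? ?]; split.
  move=> H; split.
    move=> i Hi; have := H i Hi; rewrite /Cs'.
    by case: eqP => [->|//] [? ?]; split => //; rewrite C0.
  by have := H 0%N nt0; rewrite /Cs' eqxx => -[].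
rewrite /rect (hind nt A B Cs' mABC') (hind nt A B Cs mABC).
case: nt nt0 => // n _.
rewrite !big_ord_recl /= C0 preimage_setT probability_setT mule1.
by rewrite muleAC.
Qed.


Lemma sigma_indep C : measurable C -> forall E, <<s Pi >> E ->
  P (E `&` h 0 @^-1` C) = (P E * P (h 0 @^-1` C))%E.
Proof.
move=> mC; set H := h 0 @^-1` C.
have mH : measurable H by exact: mpre_h.
pose D := [set S | measurable S /\ P (S `&` H) = (P S * P H)%E].
suff sub : <<s Pi >> `<=` D by move=> E /sub [].
apply: (lambda_system_subset Pi_setI); last by move=> X _; exact: subsetT.
- apply/dynkin_lambda_system; split.
  + by split => //; rewrite setTI probability_setT mul1e.
  + move=> S [mS eS]; split; first exact: measurableC.
    have eH : P H = (P (S `&` H) + P (~` S `&` H))%E.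
      rewrite -measureU //; [|exact: measurableI|apply: measurableI => //; exact: measurableC|].
        by rewrite -setIUl setUv setTI.
      by rewrite setIACA setICr set0I.
    rewrite probability_setC //.
    move: eH; rewrite eS.
    rewrite -(@fineK _ (P S)) ?fin_num_measure //.
    rewrite -(@fineK _ (P H)) ?fin_num_measure //.
    rewrite -(@fineK _ (P (~` S `&` H))) ?fin_num_measure //; last first.
      by apply: measurableI => //; exact: measurableC.
    rewrite -EFinM -EFinD => e0; have e := EFin_inj e0; clear e0.
    rewrite -EFinN -[1%E]/(1%:E) -EFinD -EFinM; congr EFin.
    by rewrite mulrBl mul1r {1}e; ring.
  + move=> F tF FD; split.
      by apply: bigcupT_measurable => n; have [] := FD n.
    rewrite setI_bigcupl measure_bigcup //; last first.
      apply/trivIsetP => i j _ _ ij; rewrite setIACA setIid.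
      by move/trivIsetP: tF => /(_ i j I I ij) ->; rewrite set0I.
      by move=> i _; apply: measurableI => //; have [] := FD i.
    rewrite measure_bigcup //; last by move=> i _; have [] := FD i.
    transitivity (\sum_(0 <= i <oo | i \in [set: nat]) ((fine (P H))%:E * P (F i)))%E.
      apply: eq_eseriesr => i _; transitivity (P (F i) * P H)%E; first exact: (proj2 (FD i)). rewrite muleC fineK //.
      exact: fin_num_measure.
    rewrite nneseriesZl; last by move=> i _.
    by rewrite muleC fineK //; exact: fin_num_measure.
- by move=> E PE; split; [exact: Pi_meas|exact: Pi_indep].
Qed.


Local Notation TP := (g_sigma_algebraType Pi).

Lemma mx' i : (i < nt)%N -> measurable_fun [set: TP] (x i : TP -> R * R).
Proof.
move=> ilt _ A mA; rewrite setTI; apply: sub_sigma_algebra.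
exists (fun j => if j == i then A else setT), (fun=> setT), (fun=> setT).
split; first by move=> j; case: eqP.
split => //; apply/seteqP; split=> w /=.
  by move=> xA j jlt; split; [split|] => //; case: eqP => [->|].
by move=> H; have := H i ilt; rewrite eqxx => -[[]].
Qed.

Lemma my' i : (i < nt)%N -> measurable_fun [set: TP] (y i : TP -> R * R).
Proof.
move=> ilt _ A mA; rewrite setTI; apply: sub_sigma_algebra.
exists (fun=> setT), (fun j => if j == i then A else setT), (fun=> setT).
split; first by move=> j; case: eqP.
split => //; apply/seteqP; split=> w /=.
  by move=> xA j jlt; split; [split|] => //; case: eqP => [->|].
by move=> H; have := H i ilt; rewrite eqxx => -[[]].
Qed.

Lemma mh' i : (0 < i < nt)%N -> measurable_fun [set: TP] (h i : TP -> R).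
Proof.
move=> /andP[i0 ilt] _ A mA; rewrite setTI; apply: sub_sigma_algebra.
exists (fun=> setT), (fun=> setT), (fun j => if j == i then A else setT).
split; first by move=> j; case: eqP.
split; first by rewrite ifF //; apply/negbTE; rewrite eq_sym -lt0n.
apply/seteqP; split=> w /=.
  by move=> xA j jlt; split; [split|] => //; case: eqP => [->|].
by move=> H; have := H i ilt; rewrite eqxx => -[[]].
Qed.

Lemma I_indep alpha beta fd A1 C : measurable A1 -> measurable C ->
  P (interf x y h alpha beta fd nt @^-1` A1 `&` h 0 @^-1` C) =
  (P (interf x y h alpha beta fd nt @^-1` A1) * P (h 0 @^-1` C))%E.
Proof.
move=> mA1 mC; apply: sigma_indep => //.
have mI := @measurable_interf R _ TP x y h alpha beta fd nt mx' my' mh'.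
by have := mI measurableT A1 mA1; rewrite setTI.
Qed.


Lemma cover_eq alpha beta fd theta : 0 < theta -> 0 <= beta ->
  cover_prob P x y h alpha beta fd theta nt = laplace_I P x y h alpha beta fd theta nt.
Proof.
move=> th0 be0.
set I := interf x y h alpha beta fd nt.
have mI : measurable_fun setT I.
  by apply: measurable_interf => i _; [exact: mx|exact: my|exact: mh].
pose XI : {mfun T >-> R} := HB.pack I (isMeasurableFun.Build _ _ _ _ _ mI).
pose Xh : {mfun T >-> R} := HB.pack (h 0) (isMeasurableFun.Build _ _ _ _ _ (mh 0)).
have mIh : measurable_fun setT (fun w => (I w, h 0 w)) := measurable_fun_pair mI (mh 0).
pose XIh : {mfun T >-> (R * R)%type} :=
  HB.pack (fun w => (I w, h 0 w)) (isMeasurableFun.Build _ _ _ _ _ mIh).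
pose m1 := distribution P XI.
pose m2 := distribution P Xh.
pose m' := distribution P XIh.
pose Af := [set p : R * R | (p.1 == 0) || ((0 < p.1) && (theta * p.1 <= p.2)) ||
                           ((p.1 < 0) && (p.2 <= theta * p.1))].
have mAf : measurable Af.
  have mf1 : measurable_fun setT (fun p : R * R => p.1) := measurable_fst.
  have mf2 : measurable_fun setT (fun p : R * R => p.2) := measurable_snd.
  have mt1 : measurable_fun setT (fun p : R * R => theta * p.1).
    by apply: measurable_funM => //; exact: measurable_cst.
  have mb : measurable_fun setT (fun p : R * R => (p.1 == 0) ||
      ((0 < p.1) && (theta * p.1 <= p.2)) || ((p.1 < 0) && (p.2 <= theta * p.1))).
    apply: measurable_or; first apply: measurable_or.
    - by apply: measurable_fun_eqr => //; exact: measurable_cst.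
    - apply: measurable_and; last exact: measurable_fun_ler.
      by apply: measurable_fun_ltr => //; exact: measurable_cst.
    - apply: measurable_and; last exact: measurable_fun_ler.
      by apply: measurable_fun_ltr => //; exact: measurable_cst.
  have mT : measurable [set true] by [].
  by have := mb measurableT [set true] mT; rewrite setTI; apply.
have eS : [set w | (theta%:E <= SIR x y h alpha beta fd nt w)%E] = XIh @^-1` Af.
  have key : forall w, (theta%:E <= SIR x y h alpha beta fd nt w)%E =
     ((I w == 0) || ((0 < I w) && (theta * I w <= h 0 w)) ||
      ((I w < 0) && (h 0 w <= theta * I w))).
    move=> w; rewrite /SIR /= -/I; case: (ltgtP (I w) 0) => [Ineg|Ipos|->] /=.
    - by rewrite lee_fin ler_ndivlMr.
    - by rewrite lee_fin ler_pdivlMr // orbF.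
    - by rewrite leey.
  by apply/seteqP; split => w /=; rewrite key.
have rectE : forall A B, measurable A -> measurable B -> m' (A `*` B) = (m1 A * m2 B)%E.
  move=> A B mA mB; rewrite /m' /m1 /m2 /distribution /pushforward /=.
  rewrite -I_indep //; congr (P _); apply/seteqP; split => w //=.
have uniq : (m1 \x m2)%E Af = m' Af by apply: product_measure_unique.
rewrite /cover_prob eS.
transitivity (m' Af); first by [].
rewrite -uniq /product_measure1 /= /m1.
rewrite ge0_integral_distribution; last 2 first.
- exact: measurable_fun_xsection.
- by move=> a; apply: measure_ge0; exact: measurable_xsection.
have xsecE : forall a, 0 <= a -> m2 (xsection Af a) = (expR (- (theta * a)))%:E.
  move=> a; rewrite le_eqVlt => /orP[/eqP a0|a0].
    rewrite -a0 mulr0 oppr0 expR0.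
    have -> : xsection Af 0 = setT.
      apply/seteqP; split => t //= _; rewrite /xsection /= inE /Af /=.
      by rewrite eqxx.
    by rewrite /m2 /distribution /pushforward preimage_setT probability_setT.
  have -> : xsection Af a = `[theta * a, +oo[%classic.
    apply/seteqP; split => t /=; rewrite /xsection /= inE /Af /= in_itv /= andbT.
      by rewrite gt_eqF // a0 /= ltNge (ltW a0) /= orbF mulrC.
    by rewrite gt_eqF // a0 /= mulrC => ->.
  rewrite /m2 /distribution /pushforward /= hexp; last exact: measurable_itv.
  rewrite setIidl; first by apply: exp_tail; exact: mulr_gt0.
  move=> t /=; rewrite !in_itv /= !andbT; apply: le_trans.
  by rewrite mulr_ge0 // ltW.
pose Nn := \bigcup_k h k @^-1` `]-oo, 0[%classic.
have negN : P.-negligible Nn.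
  apply: negligible_bigcup => k; apply/negligibleP; first by apply: mpre_h; exact: measurable_itv.
  apply: eq_trans; first exact: (hexp k _ (measurable_itv _)).
  rewrite (_ : _ `&` _ = set0) ?integral_set0 //.
  rewrite !set_itvE; apply/seteqP; split => t //= [] t0 t1.
  by move: (lt_le_trans t0 t1); rewrite ltxx.
have Ige0 : forall w, ~ Nn w -> 0 <= I w.
  move=> w Nw; have hk : forall k, 0 <= h k w.
    move=> k; rewrite leNgt; apply/negP => hk; apply: Nw; exists k => //=.
  rewrite /I /interf; apply: sumr_ge0 => i _.
  apply: addr_ge0; first by rewrite !mulr_ge0 // powR_ge0.
  by rewrite !mulr_ge0 ?powR_ge0.
rewrite /laplace_I; apply: ae_eq_integral => //.
- apply: measurableT_comp; [exact: measurable_fun_xsection|exact: measurable_funP].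
- apply/measurable_EFinP; apply: (@measurableT_comp _ _ _ _ _ _ (fun a => expR (- (theta * a))) _ I); last exact: mI.
  apply: measurable_realfun.continuous_measurable_fun => z.
  apply: continuous_comp; last exact: continuous_expR.
  by apply: (@continuousN _ R^o); apply: continuousM => //; exact: cst_continuous.
rewrite /ae_eq /prop_near1 /almost_everywhere /=.
apply: (negligibleS _ negN) => w /= Hw; apply: contrapT => Nw; apply: Hw => _.
by rewrite /= xsecE //; exact: Ige0.
Qed.

End Cover.

Theorem theorem2
  (R : realType) (d : measure_display) (T : measurableType d)
  (P : probability T R)
  (Ups : nat -> R -> nat -> R) (gamma_r : R)
  (N m : nat) (theta Rd alpha beta : R)
  (x y : nat -> T -> R * R) (h : nat -> T -> R) :
  (2 <= N)%N -> (N <= m)%N -> 0 < theta ->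
  0 < Rd -> 2 < alpha -> 0 <= beta <= 1 ->
  (forall k : nat, (1 <= k <= m)%N -> 0 <= Ups k gamma_r m) ->
  \sum_(k < m) Ups k.+1 gamma_r m = 1 ->
  (forall i, measurable_fun setT (x i)) ->
  (forall i, measurable_fun setT (y i)) ->
  (forall i, measurable_fun setT (h i)) ->
  (forall i, uniform_disk P Rd (x i)) ->
  (forall i, uniform_disk P Rd (y i)) ->
  (forall i, exp_mean1 P (h i)) ->
  indep_family P x y h ->
  let rho := fun l : 'I_m => Ups (val l).+1 gamma_r m in
  success_prob P x y h alpha beta N rho theta =
  ((N%:R^-1 * P_hit N rho)%:E +
   \sum_(1 <= nt < N.+1)
     (((P_HDRX N rho)%:E * laplace_I P x y h alpha beta false theta nt +
       (P_FDTR N rho)%:E * laplace_I P x y h alpha beta true theta nt) *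
      (binom_w N rho nt)%:E))%E.
Proof.
move=> N2 Nm th0 Rd0 al2 /andP[be0 be1] Ups0 Ups1 mx my mh unx uny hexp hind rho.
rewrite /success_prob.
rewrite (@hit_lemma R N m rho Ups1).
congr (_ + _)%E; apply: eq_big_nat => nt /andP[nt1 _].
rewrite (@cover_eq R d T P x y h mx my mh hexp hind nt nt1 alpha beta false theta th0 be0).
rewrite (@cover_eq R d T P x y h mx my mh hexp hind nt nt1 alpha beta true theta th0 be0).
by rewrite muleC.
Qed.
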